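(* Let $R$ be a Noetherian commutative ring and $I_1,I_2,I_3\subset R$ ideals; put $J=I_1+I_2+I_3$. Let $k_1,\dots,k_n$ generate $I_3$, let $A=R[x_1,\dots,x_n]$, and let $\pi_1:A\to R/I_1$, $\pi_2:A\to R/I_2$ be the $R$-algebra homomorphisms with $\pi_1(x_j)=k_j$ and $\pi_2(x_j)=0$ for all $j$. Then the pullback (fiber product) in commutative rings of the diagram $R/I_1\to R/J\leftarrow R/I_2$ (natural projections) is isomorphic to $A/(\ker\pi_1\cap\ker\pi_2)$. In particular this pullback is a finitely generated $R$-algebra. *)

(* Defs.v *)
From HB Require Import structures.
From mathcomp Require Import all_boot all_algebra.
From mathcomp Require Import boolp.
From mathcomp Require Import mpoly.
From mathcomp Require Import ring.

Set Implicit Arguments.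
Unset Strict Implicit.
Unset Printing Implicit Defensive.

Import GRing.Theory.
Local Open Scope ring_scope.
Local Open Scope quotient_scope.

Section Ideals.
Variable R : comPzRingType.

Definition is_ideal (I : R -> Prop) : Prop :=
  [/\ I 0, (forall x y, I x -> I y -> I (x + y)) & (forall r x, I x -> I (r * x))].

Record ideal := Ideal { ideal_mem :> R -> Prop; idealP : is_ideal ideal_mem }.

Lemma ideal0 (I : ideal) : I 0. Proof. by case: I => m; rewrite /is_ideal /=; case. Qed.
Lemma idealD (I : ideal) x y : I x -> I y -> I (x + y).
Proof. by case: I => m; rewrite /is_ideal /=; case=> _ H _; apply: H. Qed.
Lemma idealM (I : ideal) r x : I x -> I (r * x).
Proof. by case: I => m; rewrite /is_ideal /=; case=> _ _ H; apply: H. Qed.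
Lemma idealN (I : ideal) x : I x -> I (- x).
Proof. by move=> Ix; rewrite -mulN1r; apply: idealM. Qed.
Lemma idealB (I : ideal) x y : I x -> I y -> I (x - y).
Proof. by move=> Ix Iy; apply: idealD => //; apply: idealN. Qed.

Definition ideal_gen n (k : 'I_n -> R) : R -> Prop :=
  fun z => exists c : 'I_n -> R, z = \sum_(i < n) c i * k i.

Definition noetherian : Prop :=
  forall I : R -> Prop, is_ideal I ->
    exists n (k : 'I_n -> R), forall z, I z <-> ideal_gen k z.

Definition ideal_add_mem (I J : ideal) : R -> Prop :=
  fun z => exists x y, [/\ I x, J y & z = x + y].

Lemma ideal_add_is_ideal (I J : ideal) : is_ideal (ideal_add_mem I J).
Proof.
split.
- by exists 0, 0; rewrite addr0; split => //; apply: ideal0.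
- move=> _ _ [x [y [Ix Jy ->]]] [x' [y' [Ix' Jy' ->]]].
  exists (x + x'), (y + y'); split; try by apply: idealD.
  by rewrite addrACA.
- move=> r _ [x [y [Ix Jy ->]]]; exists (r * x), (r * y).
  by split; [apply: idealM|apply: idealM|rewrite mulrDr].
Qed.

Definition ideal_add (I J : ideal) : ideal := Ideal (ideal_add_is_ideal I J).

Lemma ideal_cap_is_ideal (I J : ideal) : is_ideal (fun z => I z /\ J z).
Proof.
split; first by split; apply: ideal0.
- by move=> x y [? ?] [? ?]; split; apply: idealD.
- by move=> r x [? ?]; split; apply: idealM.
Qed.

Definition ideal_cap (I J : ideal) : ideal := Ideal (ideal_cap_is_ideal I J).

End Ideals.

Section Kernel.
Variables (A : comPzRingType) (B : pzRingType) (f : {rmorphism A -> B}).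

Lemma rker_is_ideal : is_ideal (fun x => f x = 0).
Proof.
split; first by rewrite rmorph0.
- by move=> x y fx fy; rewrite rmorphD fx fy addr0.
- by move=> r x fx; rewrite rmorphM fx mulr0.
Qed.

Definition rker : ideal A := Ideal rker_is_ideal.
End Kernel.

Section Quot.
Variables (R : comPzRingType) (I : ideal R).

Definition qequiv (x y : R) : bool := `[< I (x - y) >].

Lemma qequivE x y : qequiv x y = I (x - y) :> Prop.
Proof. by rewrite /qequiv asboolE. Qed.

Lemma qequiv_is_equiv : equiv_class_of qequiv.
Proof.
split=> [x|x y|y x z].
- by apply/asboolP; rewrite subrr; apply: ideal0.
- apply/asboolP/asboolP => H; rewrite -opprB; exact: idealN.
- move=> /asboolP Hxy /asboolP Hyz; apply/asboolP.
  by rewrite -[x](addrNK y) -addrA; apply: idealD.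
Qed.

Canonical qequiv_equiv := EquivRelPack qequiv_is_equiv.
Canonical qequiv_encModRel := defaultEncModRel qequiv.

Definition quot := {eq_quot qequiv}.

HB.instance Definition _ : EqQuotient R qequiv quot := EqQuotient.on quot.
HB.instance Definition _ := Choice.on quot.

Lemma eqquotP x y : I (x - y) -> \pi_quot x = \pi_quot y.
Proof. by move=> H; apply/eqP; rewrite piE; apply/asboolP. Qed.

Lemma eqquotE x y : \pi_quot x = \pi_quot y -> I (x - y).
Proof. by move/eqP; rewrite piE => /asboolP. Qed.

Lemma reprI x : I (repr (\pi_quot x) - x).
Proof. by apply: eqquotE; rewrite reprK. Qed.

Definition qzero : quot := \pi_quot 0.
Definition qadd (a b : quot) : quot := \pi_quot (repr a + repr b).
Definition qopp (a : quot) : quot := \pi_quot (- repr a).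
Definition qone : quot := \pi_quot 1.
Definition qmul (a b : quot) : quot := \pi_quot (repr a * repr b).

Lemma pi_add x y : \pi_quot (x + y) = qadd (\pi_quot x) (\pi_quot y).
Proof.
apply: eqquotP; set a := repr _; set b := repr _.
have -> : x + y - (a + b) = - ((a - x) + (b - y)) by ring.
by apply: idealN; apply: idealD; apply: reprI.
Qed.

Lemma pi_opp x : \pi_quot (- x) = qopp (\pi_quot x).
Proof.
apply: eqquotP; set a := repr _.
have -> : - x - - a = a - x by ring.
by apply: reprI.
Qed.

Lemma pi_mul x y : \pi_quot (x * y) = qmul (\pi_quot x) (\pi_quot y).
Proof.
apply: eqquotP; set a := repr _; set b := repr _.
have -> : x * y - a * b = - ((a - x) * b + x * (b - y)) by ring.
apply: idealN; apply: idealD; first by rewrite mulrC; apply: idealM; apply: reprI.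
by apply: idealM; apply: reprI.
Qed.

Lemma quot_ind (P : quot -> Prop) : (forall x, P (\pi_quot x)) -> forall a, P a.
Proof. by move=> H a; rewrite -[a]reprK; apply: H. Qed.

Lemma addqA : associative qadd.
Proof.
by elim/quot_ind => x; elim/quot_ind => y; elim/quot_ind => z;
  rewrite -!pi_add addrA.
Qed.
Lemma addqC : commutative qadd.
Proof. by elim/quot_ind => x; elim/quot_ind => y; rewrite -!pi_add addrC. Qed.
Lemma add0q : left_id qzero qadd.
Proof. by elim/quot_ind => x; rewrite /qzero -pi_add add0r. Qed.
Lemma addNq : left_inverse qzero qopp qadd.
Proof. by elim/quot_ind => x; rewrite -pi_opp -pi_add addNr. Qed.

HB.instance Definition _ := GRing.isZmodule.Build quot addqA addqC add0q addNq.

Lemma mulqA : associative qmul.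
Proof.
by elim/quot_ind => x; elim/quot_ind => y; elim/quot_ind => z;
  rewrite -!pi_mul mulrA.
Qed.
Lemma mulqC : commutative qmul.
Proof. by elim/quot_ind => x; elim/quot_ind => y; rewrite -!pi_mul mulrC. Qed.
Lemma mul1q : left_id qone qmul.
Proof. by elim/quot_ind => x; rewrite /qone -pi_mul mul1r. Qed.
Lemma mulqDl : left_distributive qmul (@GRing.add quot).
Proof.
elim/quot_ind => x; elim/quot_ind => y; elim/quot_ind => z.
have E (a b : quot) : a + b = qadd a b by [].
by rewrite !E -(pi_add x y) -(pi_mul x z) -(pi_mul y z) -pi_add -pi_mul mulrDl.
Qed.

HB.instance Definition _ := GRing.Zmodule_isComPzRing.Build quot
  mulqA mulqC mul1q mulqDl.

Definition qpi (x : R) : quot := \pi_quot x.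

Lemma qpi_is_zmod_morphism : zmod_morphism qpi.
Proof. by move=> x y; rewrite /qpi pi_add pi_opp. Qed.
Lemma qpi_is_monoid_morphism : monoid_morphism qpi.
Proof. by split=> // x y; rewrite /qpi pi_mul. Qed.

HB.instance Definition _ := GRing.isZmodMorphism.Build R quot qpi
  qpi_is_zmod_morphism.
HB.instance Definition _ := GRing.isMonoidMorphism.Build R quot qpi
  qpi_is_monoid_morphism.


End Quot.



Section QProj.
Variables (R : comPzRingType) (I J : ideal R) (hIJ : forall x, I x -> J x).

Definition qproj_fun of (forall x, I x -> J x) := fun a : quot I => qpi J (repr a).
Definition qproj := qproj_fun hIJ.

Lemma qproj_qpi x : qproj (qpi I x) = qpi J x.
Proof.
apply: eqquotP; apply: hIJ; exact: reprI.
Qed.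

Lemma qproj_is_zmod_morphism : zmod_morphism qproj.
Proof.
elim/quot_ind => x; elim/quot_ind => y.
by rewrite -!/(qpi _ _) -rmorphB !qproj_qpi rmorphB.
Qed.
Lemma qproj_is_monoid_morphism : monoid_morphism qproj.
Proof.
split; first by rewrite -(rmorph1 (qpi I)) qproj_qpi rmorph1.
elim/quot_ind => x; elim/quot_ind => y.
by rewrite -!/(qpi _ _) -rmorphM !qproj_qpi rmorphM.
Qed.

HB.instance Definition _ := GRing.isZmodMorphism.Build (quot I) (quot J) qproj
  qproj_is_zmod_morphism.
HB.instance Definition _ := GRing.isMonoidMorphism.Build (quot I) (quot J) qproj
  qproj_is_monoid_morphism.
End QProj.

Section Pullback.
Variables (S1 S2 T : comPzRingType) (f1 : {rmorphism S1 -> T})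
  (f2 : {rmorphism S2 -> T}).

Definition pbP : pred (S1 * S2)%type := fun x => f1 x.1 == f2 x.2.

Record pullback := Pullback { pbval :> (S1 * S2)%type; _ : pbP pbval }.

HB.instance Definition _ := [isSub for pbval].
HB.instance Definition _ := [Choice of pullback by <:].

Lemma pb_subring_closed : subring_closed pbP.
Proof.
split; first by rewrite unfold_in /pbP /= !rmorph1.
- by move=> x y; rewrite !unfold_in /pbP /= => /eqP hx /eqP hy; rewrite !rmorphB hx hy.
- by move=> x y; rewrite !unfold_in /pbP /= => /eqP hx /eqP hy; rewrite !rmorphM hx hy.
Qed.

HB.instance Definition _ := GRing.SubChoice_isSubComPzRing.Build
  (S1 * S2)%type pbP pullback pb_subring_closed.
End Pullback.

(* Finitely generated R-algebras: B with structure map phi : R -> B is *)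
(* finitely generated iff some R-algebra morphism R[x_1..x_m] -> B     *)
(* (i.e. ring morphism restricting to phi on constants) is onto.       *)
Definition fg_algebra (R : comNzRingType) (B : pzRingType)
  (phi : {rmorphism R -> B}) : Prop :=
  exists m (g : {rmorphism {mpoly R[m]} -> B}),
    (forall b : B, exists p, g p = b) /\ forall r : R, g r%:MP = phi r.

Section Setting.
Variable R : comNzRingType.

Lemma ideal_add3_1 (I1 I2 I3 : ideal R) x :
  I1 x -> ideal_add (ideal_add I1 I2) I3 x.
Proof.
by move=> H; exists x, 0; rewrite addr0; split=> //;
  [exists x, 0; rewrite addr0; split=> //; apply: ideal0 | apply: ideal0].
Qed.

Lemma ideal_add3_2 (I1 I2 I3 : ideal R) x :
  I2 x -> ideal_add (ideal_add I1 I2) I3 x.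
Proof.
by move=> H; exists x, 0; rewrite addr0; split=> //;
  [exists 0, x; rewrite add0r; split=> //; apply: ideal0 | apply: ideal0].
Qed.

(* R/I1 x_{R/J} R/I2, J = I1 + I2 + I3 *)
Definition quot_pullback (I1 I2 I3 : ideal R) :=
  pullback (qproj (@ideal_add3_1 I1 I2 I3)) (qproj (@ideal_add3_2 I1 I2 I3)).

Definition qpb_alg_fun (I1 I2 I3 : ideal R) (r : R) : quot_pullback I1 I2 I3.
Proof.
refine (@Pullback _ _ _ _ _ (qpi I1 r, qpi I2 r) _).
by rewrite /pbP /= !qproj_qpi.
Defined.

Lemma qpb_alg_is_zmod_morphism I1 I2 I3 : zmod_morphism (qpb_alg_fun I1 I2 I3).
Proof. by move=> x y; apply: val_inj; rewrite /= !rmorphB. Qed.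
Lemma qpb_alg_is_monoid_morphism I1 I2 I3 :
  monoid_morphism (qpb_alg_fun I1 I2 I3).
Proof.
by split; [apply: val_inj; rewrite /= !rmorph1 | move=> x y;
  apply: val_inj; rewrite /= !rmorphM].
Qed.

HB.instance Definition _ I1 I2 I3 :=
  GRing.isZmodMorphism.Build R (quot_pullback I1 I2 I3) (qpb_alg_fun I1 I2 I3)
  (qpb_alg_is_zmod_morphism I1 I2 I3).
HB.instance Definition _ I1 I2 I3 :=
  GRing.isMonoidMorphism.Build R (quot_pullback I1 I2 I3) (qpb_alg_fun I1 I2 I3)
  (qpb_alg_is_monoid_morphism I1 I2 I3).

Definition qpb_alg (I1 I2 I3 : ideal R) : {rmorphism R -> quot_pullback I1 I2 I3} :=
  qpb_alg_fun I1 I2 I3.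

Definition eval_quot (n : nat) (I : ideal R) (v : 'I_n -> R)
  (p : {mpoly R[n]}) : quot I := qpi I (p.@[v]).

HB.instance Definition _ n I v :=
  GRing.RMorphism.copy (@eval_quot n I v) (qpi I \o meval v).

End Setting.

(* Main.v *)
Require Import Defs.
From HB Require Import structures.
From mathcomp Require Import all_boot all_algebra.
From mathcomp Require Import boolp.
From mathcomp Require Import mpoly.
From mathcomp Require Import ring.

Import GRing.Theory.
Local Open Scope ring_scope.
Local Open Scope quotient_scope.

Lemma qpi_meval (R : comNzRingType) (I : ideal R) n (v w : 'I_n -> R)
  (H : forall i, qpi I (v i) = qpi I (w i)) (p : {mpoly R[n]}) :
  qpi I p.@[v] = qpi I p.@[w].
Proof.
rewrite !mevalE !rmorph_sum; apply: eq_bigr => m _.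
rewrite !rmorphM !rmorph_prod; congr (_ * _); apply: eq_bigr => i _.
rewrite !rmorphXn; congr (_ ^+ _); exact: H.
Qed.

Section Main.
Variables (R : comNzRingType) (I1 I2 I3 : ideal R) (n : nat) (k : 'I_n -> R).
Hypothesis hk : forall z, I3 z <-> ideal_gen k z.

Definition J := ideal_add (ideal_add I1 I2) I3.

Lemma I3k i : I3 (k i).
Proof.
apply/hk; exists (fun j => (j == i)%:R).
rewrite (bigD1 i) //= eqxx mul1r big1 ?addr0 // => j /negPf ->.
by rewrite mul0r.
Qed.

Lemma Phi_ok (p : {mpoly R[n]}) :
  pbP (qproj (@ideal_add3_1 _ I1 I2 I3)) (qproj (@ideal_add3_2 _ I1 I2 I3))
      (eval_quot I1 k p, eval_quot I2 (fun _ : 'I_n => 0) p).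
Proof.
rewrite /pbP /= /eval_quot !qproj_qpi; apply/eqP/Defs.eqquotP.
have H3 : I3 (p.@[k] - p.@[fun _ : 'I_n => 0]).
  apply: (@Defs.eqquotE _ I3); apply: (@qpi_meval R I3 n) => i; apply: Defs.eqquotP.
  by rewrite subr0; apply: I3k.
by exists 0, (p.@[k] - p.@[fun _ : 'I_n => 0]); rewrite add0r; split=> //;
  apply: ideal0.
Qed.

Definition Phi_fun (p : {mpoly R[n]}) : quot_pullback I1 I2 I3 :=
  @Pullback _ _ _ _ _ _ (Phi_ok p).

Lemma Phi_is_zmod_morphism : zmod_morphism Phi_fun.
Proof. by move=> x y; apply: val_inj; rewrite /= !rmorphB. Qed.
Lemma Phi_is_monoid_morphism : monoid_morphism Phi_fun.
Proof.
by split; [apply: val_inj; rewrite /= !rmorph1 | move=> x y;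
  apply: val_inj; rewrite /= !rmorphM].
Qed.

HB.instance Definition _ :=
  GRing.isZmodMorphism.Build _ _ Phi_fun Phi_is_zmod_morphism.
HB.instance Definition _ :=
  GRing.isMonoidMorphism.Build _ _ Phi_fun Phi_is_monoid_morphism.

Definition Phi : {rmorphism {mpoly R[n]} -> quot_pullback I1 I2 I3} := Phi_fun.

Lemma Phi_surj (b : quot_pullback I1 I2 I3) : exists p, Phi p = b.
Proof.
case: b => [[a1 a2] hb].
have E1 : a1 = qpi I1 (repr a1) by rewrite /qpi reprK.
have E2 : a2 = qpi I2 (repr a2) by rewrite /qpi reprK.
have hJ : ideal_add (ideal_add I1 I2) I3 (repr a1 - repr a2).
  apply: Defs.eqquotE.
  change (qpi (ideal_add (ideal_add I1 I2) I3) (repr a1) =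
          qpi (ideal_add (ideal_add I1 I2) I3) (repr a2)).
  rewrite -(qproj_qpi (@ideal_add3_1 _ I1 I2 I3)) -(qproj_qpi (@ideal_add3_2 _ I1 I2 I3)).
  rewrite /qpi !reprK; exact/eqP.
move: hJ => [x [y [[i1 [i2 [h1 h2 ->]]] h3 e]]].
move/hk: h3 => [c ec].
exists ((repr a2 + i2)%:MP + \sum_(j < n) c j *: 'X_j).
apply: val_inj => /=; rewrite /eval_quot /=; rewrite [in RHS]E1 [in RHS]E2; congr (_, _).
- rewrite mevalD mevalC rmorph_sum /=.
  under eq_bigr do rewrite mevalZ mevalXU.
  rewrite -ec; apply: Defs.eqquotP.
  have -> : repr a2 + i2 + y - repr a1 = - i1 by rewrite -[repr a1](subrK (repr a2)) e; ring.
  exact: idealN.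
- rewrite mevalD mevalC rmorph_sum /= big1 ?addr0.
  + apply: Defs.eqquotP; have -> : repr a2 + i2 - repr a2 = i2 by ring. done.
  + by move=> j _; rewrite mevalZ mevalXU mulr0.
Qed.

Lemma Phi_C (r : R) : Phi r%:MP = qpb_alg I1 I2 I3 r.
Proof. by apply: val_inj; rewrite /= /eval_quot !mevalC. Qed.

Definition K := ideal_cap (rker (eval_quot I1 k))
                          (rker (eval_quot I2 (fun _ : 'I_n => 0))).

Definition F_fun (a : quot K) : quot_pullback I1 I2 I3 := Phi (repr a).

Lemma F_qpi p : F_fun (qpi K p) = Phi p.
Proof.
rewrite /F_fun; apply/eqP; rewrite -subr_eq0 -rmorphB; apply/eqP.
have [h1 h2] := reprI K p.
by apply: val_inj; rewrite /=; congr (_, _); [exact: h1 | exact: h2].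
Qed.

Lemma F_is_zmod_morphism : zmod_morphism F_fun.
Proof.
elim/quot_ind => x; elim/quot_ind => y.
by rewrite -!/(qpi _ _) -rmorphB !F_qpi rmorphB.
Qed.
Lemma F_is_monoid_morphism : monoid_morphism F_fun.
Proof.
split; first by rewrite -(rmorph1 (qpi K)) F_qpi rmorph1.
elim/quot_ind => x; elim/quot_ind => y.
by rewrite -!/(qpi _ _) -rmorphM !F_qpi rmorphM.
Qed.

HB.instance Definition _ :=
  GRing.isZmodMorphism.Build _ _ F_fun F_is_zmod_morphism.
HB.instance Definition _ :=
  GRing.isMonoidMorphism.Build _ _ F_fun F_is_monoid_morphism.

Definition F : {rmorphism quot K -> quot_pullback I1 I2 I3} := F_fun.

Lemma F_inj : injective F.
Proof.
elim/quot_ind => x; elim/quot_ind => y.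
rewrite -!/(qpi _ _) /= !F_qpi => /(congr1 val) /= [e1 e2].
apply: Defs.eqquotP; split => /=; by rewrite rmorphB /= ?e1 ?e2 subrr.
Qed.

Lemma F_bij : bijective F.
Proof.
pose g b := qpi K (projT1 (cid (Phi_surj b))).
have Fg : cancel g F.
  by move=> b; rewrite /g /= F_qpi (projT2 (cid (Phi_surj b))).
exists g => // a; apply: F_inj; exact: Fg.
Qed.

End Main.

Theorem lemma2p6 (R : comNzRingType) (noethR : noetherian R)
    (I1 I2 I3 : ideal R) (n : nat) (k : 'I_n -> R)
    (hk : forall z, I3 z <-> ideal_gen k z) :
  (exists f : {rmorphism
                 quot (ideal_cap (rker (eval_quot I1 k))
                                 (rker (eval_quot I2 (fun _ : 'I_n => 0))))
                 -> quot_pullback I1 I2 I3},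
      bijective f)
  /\ fg_algebra (qpb_alg I1 I2 I3).
Proof.
split; first by exists (@F R I1 I2 I3 n k hk); exact: F_bij.
exists n, (@Phi R I1 I2 I3 n k hk); split; [exact: Phi_surj | exact: Phi_C].
Qed.
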